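(* Let $\alpha>1$ and let $u_0:[0,\infty)\to[0,\infty)$ be of class $C^1$ and non-decreasing, with $m_0(\rho)=\int_0^\rho u_0(\sigma)\,d\sigma$. For $t\ge 0$ define $P_t(\rho_0)=\rho_0+\alpha\, m_0(\rho_0)\,u_0(\rho_0)^{\alpha-1}\,t$. Then for every $t\ge0$ the map $P_t:[0,\infty)\to[0,\infty)$ is a bijection with $\frac{dP_t}{d\rho_0}\ge 1$, and the function $$u(t,\rho)=\begin{cases}\big(u_0(P_t^{-1}(\rho))^{-\alpha}+\alpha t\big)^{-1/\alpha}, & u_0(P_t^{-1}(\rho))\neq 0,\\ 0,& u_0(P_t^{-1}(\rho))=0,\end{cases}$$ is continuous and $C^1$, and $m(t,\rho)=\int_0^\rho u(t,\sigma)\,d\sigma$ is a global classical ($C^1$) solution of the mass equation $m_t+m\,(m_\rho)^\alpha=0$ on $(0,\infty)\times(0,\infty)$ with $m(0,\cdot)=m_0$ and $m(t,0)=0$.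
   Context: Radially symmetric densities $u(t,x)\ge0$ on $\mathbb R^d$ are written as functions of a volume variable $\rho\ge0$ (proportional to $|x|^d$), and the mass function is $m(t,\rho)=\int_0^\rho u(t,\sigma)\,d\sigma$, so $u=m_\rho$. The ''mass equation'' associated with $u_t=\nabla\cdot(u^\alpha\nabla v)$, $-\Delta v=u$, is $m_t+m\,(m_\rho)^\alpha=0$. A classical solution is a $C^1$ function satisfying this equation pointwise. *)

(* Defs.v *)
From Stdlib Require Import Reals.
From Coquelicot Require Import Coquelicot.
Open Scope R_scope.

(* Real power with exponent a, for base x >= 0; convention 0^a = 0
   (used only with a > 0, where this is the usual value). *)
Definition rpow (x a : R) : R := if Rle_dec x 0 then 0 else Rpower x a.

Definition C1_nonneg (f : R -> R) : Prop :=
  exists f' : R -> R,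
    (forall x, 0 <= x ->
       filterlim (fun y => (f y - f x) / (y - x))
                 (within (fun y => 0 <= y /\ y <> x) (locally x))
                 (locally (f' x))) /\
    (forall x, 0 <= x ->
       filterlim f' (within (fun y => 0 <= y) (locally x)) (locally (f' x))).

Definition mass0 (u0 : R -> R) (rho : R) : R := RInt u0 0 rho.

Definition Pmap (alpha : R) (u0 : R -> R) (t rho0 : R) : R :=
  rho0 + alpha * mass0 u0 rho0 * rpow (u0 rho0) (alpha - 1) * t.

Definition usol (alpha : R) (u0 : R -> R) (Pinv : R -> R -> R) (t rho : R) : R :=
  let a := u0 (Pinv t rho) in
  if Req_EM_T a 0 then 0
  else Rpower (Rpower a (- alpha) + alpha * t) (- (1 / alpha)).

Definition msol (alpha : R) (u0 : R -> R) (Pinv : R -> R -> R) (t rho : R) : R :=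
  RInt (fun s => usol alpha u0 Pinv t s) 0 rho.

Definition openQ (p : R * R) : Prop := 0 < fst p /\ 0 < snd p.
Definition closedQ (p : R * R) : Prop := 0 <= fst p /\ 0 <= snd p.

Definition d1 (f : R -> R -> R) (p : R * R) : R := Derive (fun s => f s (snd p)) (fst p).
Definition d2 (f : R -> R -> R) (p : R * R) : R := Derive (fun r => f (fst p) r) (snd p).

Definition C1_openQ (f : R -> R -> R) : Prop :=
  forall p : R * R, openQ p ->
    ex_derive (fun s => f s (snd p)) (fst p) /\
    ex_derive (fun r => f (fst p) r) (snd p) /\
    continuous (d1 f) p /\ continuous (d2 f) p.

Definition cont_closedQ (f : R -> R -> R) : Prop :=
  forall p : R * R, closedQ p ->
    filterlim (fun q : R * R => f (fst q) (snd q))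
              (within closedQ (locally p)) (locally (f (fst p) (snd p))).

(* Main.v *)
Require Import Defs.
From Stdlib Require Import Reals Lra ClassicalEpsilon.
From Coquelicot Require Import Coquelicot.
Open Scope R_scope.


Lemma ball_R (x e y : R) : ball x e y <-> Rabs (y - x) < e.
Proof. split; intro H; exact H. Qed.

Lemma flim_within_R (f : R -> R) (D : R -> Prop) x l :
  filterlim f (within D (locally x)) (locally l) ->
  forall eps, 0 < eps -> exists del, 0 < del /\
    forall y, Rabs (y - x) < del -> D y -> Rabs (f y - l) < eps.
Proof.
  intros H eps He. rewrite filterlim_locally in H.
  destruct (H (mkposreal eps He)) as [d Hd].
  exists d. split; [apply cond_pos|]. intros y Hy Dy. apply (Hd y Hy Dy).
Qed.

Lemma cont_R_epsdel (f : R -> R) x :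
  (forall eps, 0 < eps -> exists del, 0 < del /\
    forall y, Rabs (y - x) < del -> Rabs (f y - f x) < eps) -> continuous f x.
Proof.
  intros H. unfold continuous. rewrite filterlim_locally. intros eps.
  destruct (H eps (cond_pos eps)) as [d [Hd H1]].
  exists (mkposreal d Hd). intros y Hy. apply H1. exact Hy.
Qed.

Lemma cont_R_inv (f : R -> R) x : continuous f x ->
  forall eps, 0 < eps -> exists del, 0 < del /\
    forall y, Rabs (y - x) < del -> Rabs (f y - f x) < eps.
Proof.
  intros H eps He. unfold continuous in H. rewrite filterlim_locally in H.
  destruct (H (mkposreal eps He)) as [d Hd]. exists d; split; [apply cond_pos|].
  intros y Hy. apply (Hd y Hy).
Qed.

Lemma cont2_epsdel (f : R * R -> R) p :
  (forall eps, 0 < eps -> exists del, 0 < del /\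
    forall q, Rabs (fst q - fst p) < del -> Rabs (snd q - snd p) < del ->
      Rabs (f q - f p) < eps) -> continuous f p.
Proof.
  intros H. unfold continuous. rewrite filterlim_locally. intros eps.
  destruct (H eps (cond_pos eps)) as [d [Hd H1]].
  exists (mkposreal d Hd). intros [a b] [Ha Hb]. apply H1; assumption.
Qed.

Lemma cont2_inv (f : R * R -> R) p : continuous f p ->
  forall eps, 0 < eps -> exists del, 0 < del /\
    forall q, Rabs (fst q - fst p) < del -> Rabs (snd q - snd p) < del ->
      Rabs (f q - f p) < eps.
Proof.
  intros H eps He. unfold continuous in H. rewrite filterlim_locally in H.
  destruct (H (mkposreal eps He)) as [d Hd]. exists d; split; [apply cond_pos|].
  intros [a b] Ha Hb. apply (Hd (a,b)). split; assumption.
Qed.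

Lemma locally2_of (P : R * R -> Prop) p del : 0 < del ->
  (forall q, Rabs (fst q - fst p) < del -> Rabs (snd q - snd p) < del -> P q) ->
  locally p P.
Proof.
  intros Hd H. exists (mkposreal del Hd). intros [a b] [Ha Hb]. apply H; assumption.
Qed.

Lemma locally_of (P : R -> Prop) x del : 0 < del ->
  (forall y, Rabs (y - x) < del -> P y) -> locally x P.
Proof.
  intros Hd H. exists (mkposreal del Hd). intros y Hy. apply H. exact Hy.
Qed.

Lemma rpow_pos x a : 0 < x -> rpow x a = Rpower x a.
Proof. intro H. unfold rpow. destruct (Rle_dec x 0); [lra|reflexivity]. Qed.
Lemma rpow_npos x a : x <= 0 -> rpow x a = 0.
Proof. intro H. unfold rpow. destruct (Rle_dec x 0); [reflexivity|lra]. Qed.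
Lemma rpow_ge0 x a : 0 <= rpow x a.
Proof. unfold rpow. destruct (Rle_dec x 0); [lra|]. unfold Rpower. left; apply exp_pos. Qed.
Lemma Rpower_pos x a : 0 < Rpower x a.
Proof. unfold Rpower. apply exp_pos. Qed.

Lemma rpow_mono x y a : 0 < a -> x <= y -> rpow x a <= rpow y a.
Proof.
  intros Ha Hxy. destruct (Rle_dec x 0).
  - rewrite rpow_npos by lra. apply rpow_ge0.
  - rewrite !rpow_pos by lra. apply Rle_Rpower_l; lra.
Qed.

Lemma Rpower_cont x c : 0 < x -> continuous (fun y => Rpower y c) x.
Proof.
  intro Hx. apply (@ex_derive_continuous R_AbsRing R_NormedModule). exists (c * Rpower x (c - 1)).
  apply is_derive_Reals. apply derivable_pt_lim_power. exact Hx.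
Qed.

Lemma rpow_small a e : 0 < a -> 0 < e -> exists d, 0 < d /\ forall y, y < d -> rpow y a < e.
Proof.
  intros Ha He. exists (Rpower e (1/a)). split; [apply Rpower_pos|].
  intros y Hy. destruct (Rle_dec y 0).
  - rewrite rpow_npos by lra. exact He.
  - rewrite rpow_pos by lra.
    replace e with (Rpower (Rpower e (1/a)) a).
    + apply Rlt_Rpower_l; [exact Ha| split; lra].
    + rewrite Rpower_mult. replace (1/a*a) with 1 by (field; lra). apply Rpower_1; exact He.
Qed.

Lemma rpow_cont a : 0 < a -> forall x, continuous (fun y => rpow y a) x.
Proof.
  intros Ha x. destruct (Rtotal_order x 0) as [Hx|[Hx|Hx]].
  - apply continuous_ext_loc with (fun _ => 0).
    + apply locally_of with (-x); [lra|]. intros y Hy. apply Rabs_def2 in Hy.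
      rewrite rpow_npos by lra. reflexivity.
    + apply continuous_const.
  - subst x. apply cont_R_epsdel. intros eps He.
    destruct (rpow_small a eps Ha He) as [d [Hd H]]. exists d; split; [exact Hd|].
    intros y Hy. rewrite (rpow_npos 0) by lra. rewrite Rminus_0_r.
    rewrite Rabs_right by (apply Rle_ge, rpow_ge0). apply H.
    rewrite Rminus_0_r in Hy. apply Rabs_def2 in Hy. lra.
  - apply continuous_ext_loc with (fun y => Rpower y a).
    + apply locally_of with x; [lra|]. intros y Hy. apply Rabs_def2 in Hy.
      rewrite rpow_pos by lra. reflexivity.
    + apply Rpower_cont; exact Hx.
Qed.

Lemma D_val f x l l' : derivable_pt_lim f x l -> l = l' -> derivable_pt_lim f x l'.
Proof. intros H ->. exact H. Qed.
Lemma D_mult f g x lf lg : derivable_pt_lim f x lf -> derivable_pt_lim g x lg ->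
  derivable_pt_lim (fun y => f y * g y) x (lf * g x + f x * lg).
Proof. intros; apply (derivable_pt_lim_mult f g x lf lg); assumption. Qed.
Lemma D_plus f g x lf lg : derivable_pt_lim f x lf -> derivable_pt_lim g x lg ->
  derivable_pt_lim (fun y => f y + g y) x (lf + lg).
Proof. intros; apply (derivable_pt_lim_plus f g x lf lg); assumption. Qed.
Lemma D_comp f g x lf lg : derivable_pt_lim f x lf -> derivable_pt_lim g (f x) lg ->
  derivable_pt_lim (fun y => g (f y)) x (lg * lf).
Proof. intros; apply (derivable_pt_lim_comp f g x lf lg); assumption. Qed.
Lemma D_const c x : derivable_pt_lim (fun _ => c) x 0.
Proof. apply derivable_pt_lim_const. Qed.
Lemma D_id x : derivable_pt_lim (fun y => y) x 1.
Proof. apply derivable_pt_lim_id. Qed.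
Lemma D_ext_loc f g x l del : 0 < del -> (forall y, Rabs (y - x) < del -> f y = g y) ->
  derivable_pt_lim f x l -> derivable_pt_lim g x l.
Proof.
  intros Hd Hfg H. apply is_derive_Reals. apply is_derive_Reals in H.
  apply (is_derive_ext_loc f g x l); [|exact H].
  apply locally_of with del; [exact Hd|]. exact Hfg.
Qed.
Lemma D_Rpower c x : 0 < x -> derivable_pt_lim (fun y => Rpower y c) x (c * Rpower x (c - 1)).
Proof. intro. apply derivable_pt_lim_power; assumption. Qed.

Lemma D_cont f x l : derivable_pt_lim f x l -> continuous f x.
Proof.
  intro H. apply (@ex_derive_continuous R_AbsRing R_NormedModule). exists l.
  apply is_derive_Reals. exact H.
Qed.

Lemma c_mult (f g : R * R -> R) p : continuous f p -> continuous g p ->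
  continuous (fun z => f z * g z) p.
Proof. intros Hf Hg. exact (continuous_mult f g p Hf Hg). Qed.
Lemma c_plus (f g : R * R -> R) p : continuous f p -> continuous g p ->
  continuous (fun z => f z + g z) p.
Proof. intros Hf Hg. exact (continuous_plus f g p Hf Hg). Qed.
Lemma c_const (c : R) (p : R * R) : continuous (fun _ : R * R => c) p.
Proof. apply continuous_const. Qed.
Lemma c_comp1 (f : R * R -> R) (g : R -> R) p : continuous f p -> continuous g (f p) ->
  continuous (fun z => g (f z)) p.
Proof. intros Hf Hg. exact (continuous_comp f g p Hf Hg). Qed.
Lemma c_fst (p : R * R) : continuous (fun z : R * R => fst z) p.
Proof. destruct p. apply continuous_fst. Qed.
Lemma c_snd (p : R * R) : continuous (fun z : R * R => snd z) p.
Proof. destruct p. apply continuous_snd. Qed.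
Lemma c_of_snd (g : R -> R) (p : R * R) : continuous g (snd p) ->
  continuous (fun z : R * R => g (snd z)) p.
Proof. intro H. apply (c_comp1 (fun z => snd z) g p (c_snd p) H). Qed.
Lemma c_of_fst (g : R -> R) (p : R * R) : continuous g (fst p) ->
  continuous (fun z : R * R => g (fst z)) p.
Proof. intro H. apply (c_comp1 (fun z => fst z) g p (c_fst p) H). Qed.
Lemma Rinv_cont y : y <> 0 -> continuous (fun z => / z) y.
Proof.
  intro H. apply continuity_pt_filterlim.
  apply (continuity_pt_inv (fun z => z) y); [apply continuity_pt_id| exact H].
Qed.
Lemma c_inv (f : R * R -> R) p : continuous f p -> f p <> 0 -> continuous (fun z => / f z) p.
Proof. intros Hf H. apply (c_comp1 f (fun z => / z) p Hf). apply Rinv_cont; exact H. Qed.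
Lemma c_opp (f : R * R -> R) p : continuous f p -> continuous (fun z => - f z) p.
Proof.
  intro H. apply (c_comp1 f (fun z => - z) p H).
  apply (@ex_derive_continuous R_AbsRing R_NormedModule). exists (-1).
  apply is_derive_Reals. apply (derivable_pt_lim_opp (fun z => z) (f p) 1). apply D_id.
Qed.
Lemma c_comp2 (F : R -> R -> R) (f g : R * R -> R) p :
  continuous f p -> continuous g p ->
  continuous (fun z : R * R => F (fst z) (snd z)) (f p, g p) ->
  continuous (fun z => F (f z) (g z)) p.
Proof. intros. apply (continuous_comp_2 f g F p); assumption. Qed.

Lemma cont2_to_1 (f : R * R -> R) t r : continuous f (t, r) ->
  continuous (fun y => f (t, y)) r.
Proof.
  intro H. apply cont_R_epsdel. intros eps He.
  destruct (cont2_inv f (t,r) H eps He) as [d [Hd H1]]. exists d; split; [exact Hd|].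
  intros y Hy. apply (H1 (t,y)); simpl; [rewrite Rminus_eq_0, Rabs_R0; exact Hd| exact Hy].
Qed.

Lemma DF_val f x y lx ly lx' ly' : differentiable_pt_lim f x y lx ly -> lx = lx' -> ly = ly' ->
  differentiable_pt_lim f x y lx' ly'.
Proof. intros H -> ->. exact H. Qed.

Lemma DF_bilin c0 c x y : differentiable_pt_lim (fun u v => c0 + c * u * v) x y (c * y) (c * x).
Proof.
  intros eps. exists (mkposreal (eps / (Rabs c + 1)) ltac:(apply Rdiv_lt_0_compat; [apply cond_pos| pose proof (Rabs_pos c); lra])).
  intros u v Hu Hv. simpl in Hu, Hv.
  replace (c0 + c * u * v - (c0 + c * x * y) - (c * y * (u - x) + c * x * (v - y)))
    with (c * ((u - x) * (v - y))) by ring.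
  rewrite Rabs_mult, Rabs_mult.
  assert (Hm1 : Rabs (u - x) <= Rmax (Rabs (u - x)) (Rabs (v - y))) by apply Rmax_l.
  assert (Hm2 : Rabs (v - y) <= eps / (Rabs c + 1)) by lra.
  pose proof (Rabs_pos c). pose proof (Rabs_pos (u-x)). pose proof (Rabs_pos (v-y)).
  pose proof (cond_pos eps).
  assert (Rabs c * Rabs (v - y) <= eps).
  { apply Rle_trans with (Rabs c * (eps / (Rabs c + 1))).
    - apply Rmult_le_compat_l; lra.
    - unfold Rdiv. rewrite <- Rmult_assoc. apply Rle_trans with ((Rabs c + 1) * eps * / (Rabs c + 1)).
      + apply Rmult_le_compat_r; [left; apply Rinv_0_lt_compat; lra| nra].
      + right. field. lra. }
  nra.
Qed.

Lemma DF_fst f x y l : derivable_pt_lim f x l -> differentiable_pt_lim (fun u v => f u) x y l 0.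
Proof. apply differentiable_pt_lim_proj1_0. Qed.

Lemma DF_snd f x y l : derivable_pt_lim f y l -> differentiable_pt_lim (fun u v => f v) x y 0 l.
Proof.
  intro H.
  assert (H1 : differentiable_pt_lim (fun u v => v) x y 0 1).
  { intros eps. exists eps. intros u v _ _. replace (v - y - (0 * (u - x) + 1 * (v - y))) with 0 by ring.
    rewrite Rabs_R0. apply Rmult_le_pos; [left; apply cond_pos|].
    apply Rle_trans with (Rabs (u-x)); [apply Rabs_pos| apply Rmax_l]. }
  assert (H2 : differentiable_pt_lim (fun u v => u) x y 1 0).
  { intros eps. exists eps. intros u v _ _. replace (u - x - (1 * (u - x) + 0 * (v - y))) with 0 by ring.
    rewrite Rabs_R0. apply Rmult_le_pos; [left; apply cond_pos|].
    apply Rle_trans with (Rabs (u-x)); [apply Rabs_pos| apply Rmax_l]. }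
  pose proof (differentiable_pt_lim_comp (fun a b => f a) (fun u v => v) (fun u v => u) x y l 0 0 1 1 0
    (DF_fst f y x l H) H1 H2) as K.
  eapply DF_val; [exact K| ring| ring].
Qed.

Lemma rpow_mul1 y c : 0 <= y -> rpow y c = y * rpow y (c - 1).
Proof.
  intro H. destruct (Req_dec y 0) as [->|Hne].
  - rewrite rpow_npos by lra. ring.
  - rewrite !rpow_pos by lra. replace c with (1 + (c - 1)) at 1 by ring.
    rewrite Rpower_plus, Rpower_1 by lra. reflexivity.
Qed.

Lemma D_rpow_pos f x l c : 0 < f x -> derivable_pt_lim f x l ->
  derivable_pt_lim (fun y => rpow (f y) c) x (c * Rpower (f x) (c - 1) * l).
Proof.
  intros Hpos H.
  destruct (cont_R_inv f x (D_cont _ _ _ H) (f x) Hpos) as [d [Hd0 Hd1]].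
  apply D_ext_loc with (fun y => Rpower (f y) c) d; [exact Hd0| |].
  { intros y Hy. specialize (Hd1 y Hy). apply Rabs_def2 in Hd1. rewrite rpow_pos by lra. reflexivity. }
  eapply D_val; [apply (D_comp f (fun z => Rpower z c) x l); [exact H| apply D_Rpower; exact Hpos]| ring].
Qed.

Lemma D_rpow f x l c : 1 < c ->
  (exists del, 0 < del /\ forall y, Rabs (y - x) < del -> 0 <= f y) ->
  derivable_pt_lim f x l ->
  derivable_pt_lim (fun y => rpow (f y) c) x (c * rpow (f x) (c - 1) * l).
Proof.
  intros Hc [del [Hdel Hnn]] H.
  assert (Hfx : 0 <= f x) by (apply Hnn; rewrite Rminus_eq_0, Rabs_R0; exact Hdel).
  destruct (Rlt_dec 0 (f x)) as [Hp|Hz].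
  { rewrite rpow_pos by exact Hp. apply D_rpow_pos; assumption. }
  assert (Hf0 : f x = 0) by lra.
  rewrite Hf0, (rpow_npos 0) by lra. rewrite Rmult_0_r, Rmult_0_l.
  intros eps He.
  destruct (H 1 Rlt_0_1) as [d1 H1].
  set (K := Rabs l + 1). assert (HK : 0 < K) by (unfold K; pose proof (Rabs_pos l); lra).
  destruct (rpow_small (c - 1) (eps / K) ltac:(lra) ltac:(apply Rdiv_lt_0_compat; lra)) as [d [Hd Hsm]].
  assert (Hpos : 0 < Rmin (Rmin d1 del) (d / K)).
  { apply Rmin_pos; [apply Rmin_pos; [apply cond_pos| exact Hdel]| apply Rdiv_lt_0_compat; lra]. }
  exists (mkposreal _ Hpos). simpl. intros h Hh Hhd.
  assert (Hh1 : Rabs h < d1) by (eapply Rlt_le_trans; [exact Hhd| eapply Rle_trans; [apply Rmin_l| apply Rmin_l]]).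
  assert (Hh2 : Rabs h < del) by (eapply Rlt_le_trans; [exact Hhd| eapply Rle_trans; [apply Rmin_l| apply Rmin_r]]).
  assert (Hh3 : Rabs h < d / K) by (eapply Rlt_le_trans; [exact Hhd| apply Rmin_r]).
  specialize (H1 h Hh Hh1). rewrite Hf0, Rminus_0_r in H1.
  assert (Hy : 0 <= f (x + h)) by (apply Hnn; replace (x + h - x) with h by ring; exact Hh2).
  assert (Hah : 0 < Rabs h) by (apply Rabs_pos_lt; exact Hh).
  assert (Hb : f (x + h) <= K * Rabs h).
  { assert (Rabs (f (x + h) / h) <= K).
    { unfold K. pose proof (Rabs_triang_inv (f (x + h) / h) l). lra. }
    unfold Rdiv in H0. rewrite Rabs_mult, Rabs_Rinv in H0 by exact Hh.
    rewrite Rabs_right in H0 by lra.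
    apply Rmult_le_reg_r with (/ Rabs h); [apply Rinv_0_lt_compat; exact Hah|].
    rewrite Rmult_assoc, Rinv_r by lra. lra. }
  assert (Hr : rpow (f (x + h)) (c - 1) < eps / K).
  { apply Hsm. apply Rle_lt_trans with (K * Rabs h); [exact Hb|].
    apply Rlt_le_trans with (K * (d / K)); [apply Rmult_lt_compat_l; lra| right; field; lra]. }
  rewrite Hf0, (rpow_npos 0) by lra. rewrite Rminus_0_r.
  rewrite (rpow_mul1 (f (x + h))) by exact Hy.
  pose proof (rpow_ge0 (f (x + h)) (c - 1)).
  rewrite Rminus_0_r. unfold Rdiv. rewrite Rabs_mult, Rabs_mult, Rabs_Rinv by exact Hh.
  rewrite (Rabs_right (f (x+h))) by lra. rewrite (Rabs_right (rpow _ _)) by lra.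
  apply Rle_lt_trans with (K * rpow (f (x + h)) (c - 1)).
  { replace (f (x + h) * rpow (f (x + h)) (c - 1) * / Rabs h) with
      ((f (x + h) * / Rabs h) * rpow (f (x + h)) (c - 1)) by ring.
    apply Rmult_le_compat_r; [lra|].
    apply Rmult_le_reg_r with (Rabs h); [exact Hah|].
    rewrite Rmult_assoc, Rinv_l by lra. lra. }
  apply Rlt_le_trans with (K * (eps / K)); [apply Rmult_lt_compat_l; lra| right; field; lra].
Qed.

Lemma deriv_nn_of_mono f x l : (forall y z, y <= z -> f y <= f z) ->
  derivable_pt_lim f x l -> 0 <= l.
Proof.
  intros Hm H. destruct (Rle_dec 0 l) as [|Hn]; [assumption| exfalso].
  destruct (H (- l) ltac:(lra)) as [d Hd].
  assert (Hd2 : 0 < d / 2) by (pose proof (cond_pos d); lra).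
  specialize (Hd (d / 2) ltac:(lra) ltac:(rewrite Rabs_right by lra; pose proof (cond_pos d); lra)).
  assert (0 <= (f (x + d / 2) - f x) / (d / 2)).
  { apply Rdiv_le_0_compat; [| exact Hd2]. pose proof (Hm x (x + d/2) ltac:(lra)). lra. }
  apply Rabs_def2 in Hd. lra.
Qed.

Lemma IB2 s t sg a : 0 <= s -> 0 <= t -> 0 <= sg -> 0 <= a ->
  Rabs (/ (1 + s * sg) - / (1 + t * a)) <= s * Rabs (sg - a) + Rabs (s - t) * a.
Proof.
  intros Hs Ht Hsg Ha.
  assert (H1 : 1 <= 1 + s * sg) by nra. assert (H2 : 1 <= 1 + t * a) by nra.
  replace (/ (1 + s * sg) - / (1 + t * a)) with ((t * a - s * sg) / ((1 + s * sg) * (1 + t * a)))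
    by (field; lra).
  unfold Rdiv. rewrite Rabs_mult, Rabs_Rinv by nra.
  rewrite (Rabs_right ((1 + s * sg) * (1 + t * a))) by nra.
  assert (Hn : Rabs (t * a - s * sg) <= s * Rabs (sg - a) + Rabs (s - t) * a).
  { replace (t * a - s * sg) with (s * (a - sg) + (t - s) * a) by ring.
    eapply Rle_trans; [apply Rabs_triang|]. rewrite !Rabs_mult, (Rabs_right s), (Rabs_right a) by lra.
    rewrite (Rabs_minus_sym a sg), (Rabs_minus_sym t s). lra. }
  assert (Hd : 0 < / ((1 + s * sg) * (1 + t * a)) <= 1).
  { split; [apply Rinv_0_lt_compat; nra|]. rewrite <- Rinv_1. apply Rinv_le_contravar; nra. }
  pose proof (Rabs_pos (t * a - s * sg)). nra.
Qed.

Lemma Rmax0_lip x y : Rabs (Rmax 0 y - Rmax 0 x) <= Rabs (y - x).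
Proof. unfold Rmax; repeat destruct Rle_dec; unfold Rabs; repeat destruct Rcase_abs; lra. Qed.
Lemma Rmax0_mono x y : x <= y -> Rmax 0 x <= Rmax 0 y.
Proof. unfold Rmax; repeat destruct Rle_dec; lra. Qed.
Lemma Rmax0_ge x : 0 <= Rmax 0 x.
Proof. apply Rmax_l. Qed.
Lemma Rmax0_pos x : 0 <= x -> Rmax 0 x = x.
Proof. apply Rmax_right. Qed.

Section Main.
Variable alpha : R.
Variables u0 u0' : R -> R.
Hypothesis Ha : 1 < alpha.
Hypothesis Hd : forall x, 0 <= x -> filterlim (fun y => (u0 y - u0 x) / (y - x))
  (within (fun y => 0 <= y /\ y <> x) (locally x)) (locally (u0' x)).
Hypothesis Hc : forall x, 0 <= x -> filterlim u0' (within (fun y => 0 <= y) (locally x)) (locally (u0' x)).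
Hypothesis Hnn : forall x, 0 <= x -> 0 <= u0 x.
Hypothesis Hmono : forall x y, 0 <= x -> x <= y -> u0 x <= u0 y.

Definition ue x := u0 (Rmax 0 x).
Definition me x := RInt ue 0 x.

Lemma u0_cont_within x : 0 <= x -> forall eps, 0 < eps -> exists del, 0 < del /\
  forall y, 0 <= y -> Rabs (y - x) < del -> Rabs (u0 y - u0 x) < eps.
Proof.
  intros Hx eps He.
  destruct (flim_within_R _ _ x _ (Hd x Hx) 1 Rlt_0_1) as [d1 [Hd1 H1]].
  set (K := Rabs (u0' x) + 1).
  assert (HK : 0 < K) by (unfold K; pose proof (Rabs_pos (u0' x)); lra).
  exists (Rmin d1 (eps / K)). split.
  { apply Rmin_pos; [exact Hd1| apply Rdiv_lt_0_compat; assumption]. }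
  intros y Hy Hyx.
  destruct (Req_dec y x) as [->|Hne].
  { rewrite Rminus_eq_0, Rabs_R0. exact He. }
  assert (Hq := H1 y (Rlt_le_trans _ _ _ Hyx (Rmin_l _ _)) (conj Hy Hne)).
  assert (Hyx2 : Rabs (y - x) < eps / K) by (apply Rlt_le_trans with (1 := Hyx); apply Rmin_r).
  assert (Hnz : y - x <> 0) by lra.
  replace (u0 y - u0 x) with ((u0 y - u0 x) / (y - x) * (y - x)) by (field; exact Hnz).
  rewrite Rabs_mult.
  assert (Rabs ((u0 y - u0 x) / (y - x)) <= K).
  { unfold K. pose proof (Rabs_triang_inv ((u0 y - u0 x) / (y - x)) (u0' x)). lra. }
  apply Rle_lt_trans with (K * Rabs (y - x)).
  { apply Rmult_le_compat_r; [apply Rabs_pos| assumption]. }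
  apply Rlt_le_trans with (K * (eps / K)).
  { apply Rmult_lt_compat_l; assumption. }
  right; field; lra.
Qed.

Lemma ue_cont x : continuous ue x.
Proof.
  apply cont_R_epsdel. intros eps He.
  destruct (u0_cont_within (Rmax 0 x) (Rmax0_ge x) eps He) as [d [Hd0 H]].
  exists d; split; [exact Hd0|]. intros y Hy. unfold ue. apply H; [apply Rmax0_ge|].
  eapply Rle_lt_trans; [apply Rmax0_lip| exact Hy].
Qed.

Lemma ue_nn x : 0 <= ue x.
Proof. unfold ue. apply Hnn, Rmax0_ge. Qed.
Lemma ue_mono x y : x <= y -> ue x <= ue y.
Proof. intro H. unfold ue. apply Hmono; [apply Rmax0_ge| apply Rmax0_mono; exact H]. Qed.
Lemma ue_eq x : 0 <= x -> ue x = u0 x.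
Proof. intro H. unfold ue. rewrite Rmax0_pos; auto. Qed.

Lemma ue_deriv x : 0 < x -> derivable_pt_lim ue x (u0' x).
Proof.
  intros Hx eps He.
  destruct (flim_within_R _ _ x _ (Hd x (Rlt_le _ _ Hx)) eps He) as [d1 [Hd1 H1]].
  exists (mkposreal (Rmin d1 x) (Rmin_pos _ _ Hd1 Hx)). simpl. intros k Hk Hkd.
  assert (Hk1 : Rabs k < d1) by (apply Rlt_le_trans with (1 := Hkd); apply Rmin_l).
  assert (Hk2 : Rabs k < x) by (apply Rlt_le_trans with (1 := Hkd); apply Rmin_r).
  apply Rabs_def2 in Hk2.
  unfold ue. rewrite !Rmax0_pos by lra.
  replace k with (x + k - x) at 2 by ring.
  apply H1.
  - replace (x + k - x) with k by ring. exact Hk1.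
  - split; [lra| intro; apply Hk; lra].
Qed.

Lemma u0'_cont x : 0 < x -> continuous u0' x.
Proof.
  intro Hx. apply cont_R_epsdel. intros eps He.
  destruct (flim_within_R _ _ x _ (Hc x (Rlt_le _ _ Hx)) eps He) as [d1 [Hd1 H1]].
  exists (Rmin d1 x); split; [apply Rmin_pos; lra|]. intros y Hy.
  assert (Hk1 : Rabs (y - x) < d1) by (apply Rlt_le_trans with (1 := Hy); apply Rmin_l).
  assert (Hk2 : Rabs (y - x) < x) by (apply Rlt_le_trans with (1 := Hy); apply Rmin_r).
  apply Rabs_def2 in Hk2. apply H1; [exact Hk1| lra].
Qed.

Lemma me_deriv x : derivable_pt_lim me x (ue x).
Proof.
  apply is_derive_Reals. unfold me.
  apply (@is_derive_RInt R_NormedModule ue (RInt ue 0) 0 x).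
  - exists (mkposreal 1 Rlt_0_1). intros b _. apply (@RInt_correct R_CompleteNormedModule).
    apply (@ex_RInt_continuous R_CompleteNormedModule). intros z _. apply ue_cont.
  - apply ue_cont.
Qed.

Lemma me_cont x : continuous me x.
Proof. apply (D_cont _ _ _ (me_deriv x)). Qed.

Lemma me_0 : me 0 = 0.
Proof. unfold me. rewrite RInt_point. reflexivity. Qed.

Lemma me_incr x y : x <= y -> 0 <= me y - me x <= (y - x) * ue y.
Proof.
  intro H. destruct (Req_dec x y) as [->|Hne].
  { rewrite Rminus_eq_0. lra. }
  destruct (MVT_cor2 me ue x y ltac:(lra) (fun c _ => me_deriv c)) as [c [Hc1 Hc2]].
  rewrite Hc1. pose proof (ue_nn c). pose proof (ue_mono c y ltac:(lra)). split; nra.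
Qed.

Lemma me_nn x : 0 <= x -> 0 <= me x.
Proof. intro H. pose proof (me_incr 0 x H). rewrite me_0 in H0. lra. Qed.

Lemma mass0_eq x : 0 <= x -> mass0 u0 x = me x.
Proof.
  intro H. unfold mass0, me. apply RInt_ext. intros z Hz.
  rewrite Rmin_left in Hz by exact H. rewrite ue_eq; [reflexivity| lra].
Qed.


Lemma c1_mult (f g : R -> R) x : continuous f x -> continuous g x ->
  continuous (fun z => f z * g z) x.
Proof. intros Hf Hg. exact (continuous_mult f g x Hf Hg). Qed.
Lemma c1_plus (f g : R -> R) x : continuous f x -> continuous g x ->
  continuous (fun z => f z + g z) x.
Proof. intros Hf Hg. exact (continuous_plus f g x Hf Hg). Qed.
Lemma c1_comp (f g : R -> R) x : continuous f x -> continuous g (f x) ->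
  continuous (fun z => g (f z)) x.
Proof. intros Hf Hg. exact (continuous_comp f g x Hf Hg). Qed.
Lemma c1_const (c x : R) : continuous (fun _ : R => c) x.
Proof. apply continuous_const. Qed.
Lemma Rmax0_cont x : continuous (fun y => Rmax 0 y) x.
Proof.
  apply cont_R_epsdel. intros eps He. exists eps; split; [exact He|].
  intros y Hy. eapply Rle_lt_trans; [apply Rmax0_lip| exact Hy].
Qed.

Definition h x := rpow (ue x) alpha.
Definition r1 x := rpow (ue x) (alpha - 1).
Definition hp x := alpha * rpow (ue x) (alpha - 1) * u0' x.
Definition ae x := alpha * me (Rmax 0 x) * rpow (ue x) (alpha - 1).
Definition Gf x := if Rle_dec (ue x) 0 then 0 else me x * Rpower (ue x) (alpha - 2) * u0' x.
Definition ad x := alpha * h x + alpha * (alpha - 1) * Gf x.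

Lemma h_deriv x : 0 < x -> derivable_pt_lim h x (hp x).
Proof.
  intro Hx. unfold h, hp. apply (D_rpow ue x (u0' x) alpha Ha).
  - exists 1; split; [lra| intros; apply ue_nn].
  - apply ue_deriv; exact Hx.
Qed.
Lemma h_cont x : continuous h x.
Proof. unfold h. apply (c1_comp ue (fun y => rpow y alpha)); [apply ue_cont| apply rpow_cont; lra]. Qed.
Lemma r1_cont x : continuous r1 x.
Proof. unfold r1. apply (c1_comp ue (fun y => rpow y (alpha - 1))); [apply ue_cont| apply rpow_cont; lra]. Qed.
Lemma h_nn x : 0 <= h x.
Proof. apply rpow_ge0. Qed.
Lemma h_eq x : h x = ue x * r1 x.
Proof. unfold h, r1. apply rpow_mul1, ue_nn. Qed.

Lemma ae_cont x : continuous ae x.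
Proof.
  unfold ae. apply c1_mult; [apply c1_mult; [apply c1_const|] | apply r1_cont].
  apply (c1_comp (fun y => Rmax 0 y) me); [apply Rmax0_cont| apply me_cont].
Qed.

Lemma ae_le0 x : x <= 0 -> ae x = 0.
Proof. intro H. unfold ae. rewrite Rmax_left by exact H. rewrite me_0. ring. Qed.
Lemma ae_nn x : 0 <= ae x.
Proof.
  unfold ae. apply Rmult_le_pos; [apply Rmult_le_pos; [lra| apply me_nn, Rmax0_ge]| apply rpow_ge0].
Qed.
Lemma ae_mono y z : y <= z -> ae y <= ae z.
Proof.
  intro H. unfold ae.
  assert (H1 : me (Rmax 0 y) <= me (Rmax 0 z)).
  { pose proof (me_incr _ _ (Rmax0_mono y z H)). lra. }
  assert (H2 : rpow (ue y) (alpha - 1) <= rpow (ue z) (alpha - 1)).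
  { apply rpow_mono; [lra| apply ue_mono; exact H]. }
  pose proof (me_nn (Rmax 0 y) (Rmax0_ge y)). pose proof (rpow_ge0 (ue y) (alpha - 1)).
  apply Rmult_le_compat; [| apply rpow_ge0 | | exact H2].
  - apply Rmult_le_pos; lra.
  - apply Rmult_le_compat_l; lra.
Qed.

Lemma ue_zero_me x : 0 <= x -> ue x <= 0 -> me x = 0.
Proof.
  intros Hx H. pose proof (me_incr 0 x Hx). rewrite me_0 in H0. pose proof (ue_nn x). nra.
Qed.

Lemma ae_deriv x : 0 < x -> derivable_pt_lim ae x (ad x).
Proof.
  intro Hx. destruct (Rle_dec (ue x) 0) as [Hz|Hp].
  -
    assert (Hue : ue x = 0) by (pose proof (ue_nn x); lra).
    assert (Had : ad x = 0).
    { unfold ad, Gf, h. destruct (Rle_dec (ue x) 0); [|lra]. rewrite rpow_npos by lra. ring. }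
    assert (Hae : ae x = 0).
    { unfold ae. rewrite (rpow_npos (ue x)) by lra. ring. }
    rewrite Had. intros eps He.
    destruct (cont_R_inv h x (h_cont x) (eps / alpha) ltac:(apply Rdiv_lt_0_compat; lra)) as [d [Hd0 Hd1]].
    exists (mkposreal (Rmin d x) (Rmin_pos _ _ Hd0 Hx)). simpl. intros k Hk Hkd.
    assert (Hk1 : Rabs k < d) by (eapply Rlt_le_trans; [exact Hkd| apply Rmin_l]).
    assert (Hk2 : Rabs k < x) by (eapply Rlt_le_trans; [exact Hkd| apply Rmin_r]).
    apply Rabs_def2 in Hk2. rewrite Hae, Rminus_0_r, Rminus_0_r.
    destruct (Rlt_dec k 0) as [Hneg|Hpos].
    + assert (ue (x + k) <= 0) by (pose proof (ue_mono (x + k) x ltac:(lra)); lra).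
      unfold ae. rewrite (rpow_npos (ue (x + k))) by lra.
      replace (alpha * me (Rmax 0 (x + k)) * 0 / k) with 0 by (field; lra). rewrite Rabs_R0. exact He.
    + assert (Hkp : 0 < k) by lra.
      assert (Hhy : h (x + k) < eps / alpha).
      { specialize (Hd1 (x + k) ltac:(replace (x + k - x) with k by ring; exact Hk1)).
        unfold h in Hd1 at 2. rewrite Hue, rpow_npos in Hd1 by lra. rewrite Rminus_0_r in Hd1.
        apply Rabs_def2 in Hd1. lra. }
      assert (Hme : me (x + k) <= k * ue (x + k)).
      { pose proof (me_incr x (x + k) ltac:(lra)). rewrite (ue_zero_me x) in H by lra. lra. }
      assert (Hb : 0 <= ae (x + k) <= alpha * k * h (x + k)).
      { split; [apply ae_nn|]. unfold ae. rewrite Rmax0_pos by lra. rewrite h_eq. unfold r1.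
        pose proof (rpow_ge0 (ue (x + k)) (alpha - 1)).
        replace (alpha * k * (ue (x + k) * rpow (ue (x + k)) (alpha - 1))) with
          (alpha * (k * ue (x + k)) * rpow (ue (x + k)) (alpha - 1)) by ring.
        apply Rmult_le_compat_r; [lra|]. apply Rmult_le_compat_l; lra. }
      rewrite Rabs_right.
      * apply Rmult_lt_reg_r with k; [exact Hkp|]. unfold Rdiv. rewrite Rmult_assoc, Rinv_l by lra.
        rewrite Rmult_1_r.
        apply Rle_lt_trans with (alpha * k * h (x + k)); [lra|].
        replace (eps * k) with (alpha * k * (eps / alpha)) by (field; lra).
        apply Rmult_lt_compat_l; [nra| exact Hhy].
      * apply Rle_ge. apply Rdiv_le_0_compat; lra.
  -
    assert (Hp' : 0 < ue x) by lra.
    destruct (cont_R_inv ue x (ue_cont x) (ue x) Hp') as [d [Hd0 Hd1]].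
    apply D_ext_loc with (fun y => (alpha * me y) * rpow (ue y) (alpha - 1)) x; [exact Hx| |].
    { intros y Hy. apply Rabs_def2 in Hy. unfold ae. rewrite Rmax0_pos by lra. reflexivity. }
    eapply D_val.
    + apply D_mult.
      * apply (D_mult (fun _ => alpha) me x 0 (ue x)); [apply D_const| apply me_deriv].
      * apply (D_rpow_pos ue x (u0' x) (alpha - 1) Hp'). apply ue_deriv; exact Hx.
    + unfold ad, Gf. destruct (Rle_dec (ue x) 0); [lra|]. rewrite h_eq. unfold r1.
      replace (alpha - 1 - 1) with (alpha - 2) by ring. ring.
Qed.

Lemma ad_nn x : 0 < x -> 0 <= ad x.
Proof. intro Hx. apply (deriv_nn_of_mono ae x); [exact ae_mono| apply ae_deriv; exact Hx]. Qed.

Lemma Gf_cont x : 0 < x -> continuous Gf x.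
Proof.
  intro Hx. destruct (Rle_dec (ue x) 0) as [Hz|Hp].
  - assert (Hue : ue x = 0) by (pose proof (ue_nn x); lra).
    apply cont_R_epsdel. intros eps He.
    set (B := Rabs (u0' x) + 1). assert (HB : 0 < B) by (unfold B; pose proof (Rabs_pos (u0' x)); lra).
    destruct (cont_R_inv u0' x (u0'_cont x Hx) 1 Rlt_0_1) as [d1 [Hd1 H1]].
    destruct (cont_R_inv r1 x (r1_cont x) 1 Rlt_0_1) as [d2 [Hd2 H2]].
    exists (Rmin (Rmin d1 d2) (Rmin x (eps / B))). split.
    { repeat apply Rmin_pos; try lra. apply Rdiv_lt_0_compat; lra. }
    intros y Hy.
    assert (Hy1 : Rabs (y - x) < d1) by (eapply Rlt_le_trans; [exact Hy| eapply Rle_trans; [apply Rmin_l| apply Rmin_l]]).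
    assert (Hy2 : Rabs (y - x) < d2) by (eapply Rlt_le_trans; [exact Hy| eapply Rle_trans; [apply Rmin_l| apply Rmin_r]]).
    assert (Hy3 : Rabs (y - x) < x) by (eapply Rlt_le_trans; [exact Hy| eapply Rle_trans; [apply Rmin_r| apply Rmin_l]]).
    assert (Hy4 : Rabs (y - x) < eps / B) by (eapply Rlt_le_trans; [exact Hy| eapply Rle_trans; [apply Rmin_r| apply Rmin_r]]).
    assert (HGx : Gf x = 0) by (unfold Gf; destruct (Rle_dec (ue x) 0); [reflexivity| lra]).
    rewrite HGx, Rminus_0_r. unfold Gf. destruct (Rle_dec (ue y) 0) as [Hyz|Hyp].
    { rewrite Rabs_R0. exact He. }
    assert (Hyx : x < y).
    { destruct (Rlt_dec x y); [assumption|]. pose proof (ue_mono y x ltac:(lra)). lra. }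
    assert (Hme : 0 <= me y <= (y - x) * ue y).
    { pose proof (me_incr x y ltac:(lra)). rewrite (ue_zero_me x) in H by lra. lra. }
    specialize (H1 y Hy1). specialize (H2 y Hy2).
    unfold r1 in H2. rewrite Hue, (rpow_npos 0) in H2 by lra. rewrite Rminus_0_r in H2.
    rewrite rpow_pos in H2 by lra. rewrite Rabs_right in H2 by (left; apply Rpower_pos).
    assert (Hup : Rabs (u0' y) < B) by (unfold B; pose proof (Rabs_triang_inv (u0' y) (u0' x)); lra).
    assert (Hpw : ue y * Rpower (ue y) (alpha - 2) = Rpower (ue y) (alpha - 1)).
    { replace (alpha - 1) with (1 + (alpha - 2)) by ring. rewrite Rpower_plus, Rpower_1 by lra. reflexivity. }
    rewrite Rabs_mult, Rabs_mult. rewrite (Rabs_right (me y)) by lra.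
    rewrite (Rabs_right (Rpower _ _)) by (left; apply Rpower_pos).
    pose proof (Rpower_pos (ue y) (alpha - 2)). pose proof (Rabs_pos (u0' y)).
    assert (me y * Rpower (ue y) (alpha - 2) <= (y - x)).
    { apply Rle_trans with ((y - x) * ue y * Rpower (ue y) (alpha - 2)).
      - apply Rmult_le_compat_r; lra.
      - rewrite Rmult_assoc, Hpw. nra. }
    apply Rabs_def2 in Hy4. apply Rle_lt_trans with ((y - x) * Rabs (u0' y)).
    { apply Rmult_le_compat_r; lra. }
    apply Rle_lt_trans with ((eps / B) * Rabs (u0' y)); [apply Rmult_le_compat_r; lra|].
    destruct (Req_dec (Rabs (u0' y)) 0) as [E|E].
    { rewrite E. lra. }
    apply Rlt_le_trans with ((eps / B) * B); [apply Rmult_lt_compat_l; [apply Rdiv_lt_0_compat; lra| lra]|].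
    right; field; lra.
  - assert (Hp' : 0 < ue x) by lra.
    destruct (cont_R_inv ue x (ue_cont x) (ue x) Hp') as [d [Hd0 Hd1]].
    apply continuous_ext_loc with (fun y => me y * Rpower (ue y) (alpha - 2) * u0' y).
    + apply locally_of with d; [exact Hd0|]. intros y Hy. specialize (Hd1 y Hy). apply Rabs_def2 in Hd1.
      unfold Gf. destruct (Rle_dec (ue y) 0); [lra| reflexivity].
    + apply c1_mult; [apply c1_mult|].
      * apply me_cont.
      * apply (c1_comp ue (fun z => Rpower z (alpha - 2))); [apply ue_cont| apply Rpower_cont; exact Hp'].
      * apply u0'_cont; exact Hx.
Qed.

Lemma ad_cont x : 0 < x -> continuous ad x.
Proof.
  intro Hx. unfold ad. apply c1_plus; apply c1_mult; try apply c1_const.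
  - apply h_cont.
  - apply Gf_cont; exact Hx.
Qed.


Definition T t := Rmax 0 t.
Definition Pe t x := x + ae x * T t.
Definition Qe t r := epsilon (inhabits 0) (fun x => Pe t x = r).

Lemma T_nn t : 0 <= T t.
Proof. apply Rmax0_ge. Qed.
Lemma T_pos t : 0 <= t -> T t = t.
Proof. apply Rmax0_pos. Qed.

Lemma Pe_cont t x : continuous (Pe t) x.
Proof. unfold Pe. apply c1_plus; [apply continuous_id| apply c1_mult; [apply ae_cont| apply c1_const]]. Qed.

Lemma Pe_expand t x y : x <= y -> y - x <= Pe t y - Pe t x.
Proof. intro H. unfold Pe. pose proof (ae_mono x y H). pose proof (T_nn t). nra. Qed.

Lemma Pe_exists t r : exists x, Pe t x = r.
Proof.
  destruct (Rle_dec r 0) as [Hr|Hr].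
  - exists r. unfold Pe. rewrite ae_le0 by exact Hr. ring.
  - destruct (IVT_gen_consistent (Pe t) 0 r r (Pe_cont t)) as [x [_ Hx]].
    + assert (Pe t 0 = 0) by (unfold Pe; rewrite ae_le0 by lra; ring).
      assert (r <= Pe t r) by (unfold Pe; pose proof (ae_nn r); pose proof (T_nn t); nra).
      rewrite H, Rmin_left, Rmax_right; lra.
    + exists x; exact Hx.
Qed.

Lemma Qe_spec t r : Pe t (Qe t r) = r.
Proof. unfold Qe. apply (epsilon_spec (inhabits 0) (fun x => Pe t x = r)). apply Pe_exists. Qed.

Lemma Pe_inj t x y : Pe t x = Pe t y -> x = y.
Proof.
  intro H. destruct (Rtotal_order x y) as [Hl|[He|Hg]]; [|exact He|].
  - pose proof (Pe_expand t x y (Rlt_le _ _ Hl)). lra.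
  - pose proof (Pe_expand t y x (Rlt_le _ _ Hg)). lra.
Qed.

Lemma Qe_unique t r x : Pe t x = r -> x = Qe t r.
Proof. intro H. apply (Pe_inj t). rewrite Qe_spec. exact H. Qed.

Lemma Pe_lip t x y : Rabs (y - x) <= Rabs (Pe t y - Pe t x).
Proof.
  destruct (Rle_dec x y) as [H|H].
  - pose proof (Pe_expand t x y H). rewrite !Rabs_right by lra. lra.
  - pose proof (Pe_expand t y x ltac:(lra)). rewrite !Rabs_left1 by lra. lra.
Qed.

Lemma Qe_lip_r t r r' : Rabs (Qe t r' - Qe t r) <= Rabs (r' - r).
Proof. eapply Rle_trans; [apply (Pe_lip t)|]. rewrite !Qe_spec. lra. Qed.

Lemma Qe_lip_t s t r : Rabs (Qe s r - Qe t r) <= Rabs (s - t) * ae (Qe t r).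
Proof.
  eapply Rle_trans; [apply (Pe_lip s)|]. rewrite Qe_spec.
  pose proof (Qe_spec t r) as E. unfold Pe in E |- *.
  set (x := Qe t r) in *.
  replace (r - (x + ae x * T s)) with (ae x * (T t - T s)) by lra.
  rewrite Rabs_mult, Rabs_right by (apply Rle_ge, ae_nn).
  rewrite Rmult_comm. apply Rmult_le_compat_r; [apply ae_nn|].
  rewrite Rabs_minus_sym. apply Rmax0_lip.
Qed.

Lemma Qe_cont2 p : continuous (fun z => Qe (fst z) (snd z)) p.
Proof.
  apply cont2_epsdel. intros eps He. destruct p as [t r]. simpl.
  set (A := ae (Qe t r)). assert (HA : 0 <= A) by apply ae_nn.
  exists (Rmin (eps / 2) (eps / (2 * (A + 1)))). split.
  { apply Rmin_pos; apply Rdiv_lt_0_compat; lra. }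
  intros [s r'] Hs Hr. simpl in Hs, Hr |- *.
  assert (Hr1 : Rabs (r' - r) < eps / 2) by (eapply Rlt_le_trans; [exact Hr| apply Rmin_l]).
  assert (Hs1 : Rabs (s - t) < eps / (2 * (A + 1))) by (eapply Rlt_le_trans; [exact Hs| apply Rmin_r]).
  replace (Qe s r' - Qe t r) with ((Qe s r' - Qe s r) + (Qe s r - Qe t r)) by ring.
  eapply Rle_lt_trans; [apply Rabs_triang|].
  pose proof (Qe_lip_r s r r'). pose proof (Qe_lip_t s t r). fold A in H0.
  assert (Rabs (s - t) * A <= eps / 2).
  { apply Rle_trans with (eps / (2 * (A + 1)) * (A + 1)).
    - pose proof (Rabs_pos (s - t)). nra.
    - right; field; lra. }
  lra.
Qed.

Lemma Qe_nn t r : 0 <= r -> 0 <= Qe t r.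
Proof.
  intro Hr. destruct (Rle_dec 0 (Qe t r)) as [|Hn]; [assumption|].
  pose proof (Qe_spec t r). unfold Pe in H. rewrite ae_le0 in H by lra. lra.
Qed.
Lemma Qe_pos t r : 0 < r -> 0 < Qe t r.
Proof.
  intro Hr. destruct (Rlt_dec 0 (Qe t r)) as [|Hn]; [assumption|].
  pose proof (Qe_spec t r). unfold Pe in H. rewrite ae_le0 in H by lra. lra.
Qed.
Lemma Qe_0 t : Qe t 0 = 0.
Proof. symmetry. apply Qe_unique. unfold Pe. rewrite ae_le0 by lra. ring. Qed.

Lemma Qe_dr t r : 0 < t -> 0 < r ->
  derivable_pt_lim (fun r' => Qe t r') r (/ (1 + t * ad (Qe t r))).
Proof.
  intros Ht Hr. set (x := Qe t r). assert (Hx : 0 < x) by (apply Qe_pos; exact Hr).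
  pose proof (ad_nn x Hx) as Had.
  intros eps He.
  destruct (ae_deriv x Hx (eps / (t + 1)) ltac:(apply Rdiv_lt_0_compat; lra)) as [d1 H1].
  exists d1. intros h Hh Hhd.
  set (y := Qe t (r + h)). set (k := y - x).
  assert (Hk : Rabs k <= Rabs h) by (unfold k, y, x; pose proof (Qe_lip_r t r (r + h)); replace (r + h - r) with h in H by ring; exact H).
  assert (E : k + (ae y - ae x) * t = h).
  { pose proof (Qe_spec t (r + h)) as E1. pose proof (Qe_spec t r) as E2. fold y in E1. fold x in E2.
    unfold Pe in E1, E2. rewrite T_pos in E1, E2 by lra. unfold k. lra. }
  assert (Hk0 : k <> 0).
  { intro K0. assert (y = x) by (unfold k in K0; lra). rewrite H in E. unfold k in E. apply Hh. lra. }
  specialize (H1 k Hk0 (Rle_lt_trans _ _ _ Hk Hhd)).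
  replace (x + k) with y in H1 by (unfold k; ring).
  set (sg := (ae y - ae x) / k) in *.
  assert (Hsg : 0 <= sg).
  { unfold sg. destruct (Rtotal_order k 0) as [Kn|[Kz|Kp]]; [| contradiction |].
    - pose proof (ae_mono y x ltac:(unfold k in Kn; lra)). replace ((ae y - ae x) / k) with ((ae x - ae y) / (- k)) by (field; exact Hk0).
      apply Rdiv_le_0_compat; lra.
    - pose proof (ae_mono x y ltac:(unfold k in Kp; lra)). apply Rdiv_le_0_compat; lra. }
  assert (Eh : h = k * (1 + t * sg)) by (unfold sg; rewrite <- E; field; exact Hk0).
  match goal with |- Rabs (?q - _) < _ => replace q with (/ (1 + t * sg)) end.
  2:{ change (Qe t (r + h)) with y. change (Qe t r) with x. replace (y - x) with k by reflexivity. rewrite Eh. field. split; [nra| exact Hk0]. }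
  eapply Rle_lt_trans; [apply (IB2 t t sg (ad x)); lra|].
  rewrite Rminus_eq_0, Rabs_R0, Rmult_0_l, Rplus_0_r.
  apply Rle_lt_trans with (t * (eps / (t + 1))).
  { apply Rmult_le_compat_l; lra. }
  apply Rlt_le_trans with ((t + 1) * (eps / (t + 1))).
  { apply Rmult_lt_compat_r; [apply Rdiv_lt_0_compat|]; lra. }
  right; field; lra.
Qed.

Lemma Qe_dt t r : 0 < t -> 0 < r ->
  derivable_pt_lim (fun s => Qe s r) t (- ae (Qe t r) / (1 + t * ad (Qe t r))).
Proof.
  intros Ht Hr. set (x := Qe t r). assert (Hx : 0 < x) by (apply Qe_pos; exact Hr).
  pose proof (ad_nn x Hx) as Had. set (A := ae x). assert (HA : 0 <= A) by apply ae_nn.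
  set (a := ad x) in *.
  intros eps He.
  set (eta := eps / (2 * (A + 1) * (t + 2))).
  assert (Heta : 0 < eta) by (unfold eta; apply Rdiv_lt_0_compat; [lra| nra]).
  destruct (ae_deriv x Hx eta Heta) as [d1 H1].
  set (del := Rmin (Rmin t 1) (Rmin (d1 / (A + 1)) (eps / (2 * (A + 1) * (a + 1))))).
  assert (Hdel : 0 < del).
  { unfold del. repeat apply Rmin_pos; try lra; apply Rdiv_lt_0_compat; try lra; try nra. apply cond_pos. }
  exists (mkposreal del Hdel). simpl. intros h Hh Hhd.
  assert (Hh1 : Rabs h < t) by (eapply Rlt_le_trans; [exact Hhd| unfold del; eapply Rle_trans; [apply Rmin_l| apply Rmin_l]]).
  assert (Hh2 : Rabs h < 1) by (eapply Rlt_le_trans; [exact Hhd| unfold del; eapply Rle_trans; [apply Rmin_l| apply Rmin_r]]).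
  assert (Hh3 : Rabs h < d1 / (A + 1)) by (eapply Rlt_le_trans; [exact Hhd| unfold del; eapply Rle_trans; [apply Rmin_r| apply Rmin_l]]).
  assert (Hh4 : Rabs h < eps / (2 * (A + 1) * (a + 1))) by (eapply Rlt_le_trans; [exact Hhd| unfold del; eapply Rle_trans; [apply Rmin_r| apply Rmin_r]]).
  pose proof (Rabs_pos h) as Hhp.
  assert (Hah : 0 < Rabs h) by (apply Rabs_pos_lt; exact Hh).
  apply Rabs_def2 in Hh1 as Hh1'. apply Rabs_def2 in Hh2 as Hh2'.
  set (s := t + h). assert (Hs : 0 < s) by (unfold s; lra).
  set (y := Qe s r). set (k := y - x).
  assert (Hk : Rabs k <= Rabs h * A).
  { unfold k, y, x, A. pose proof (Qe_lip_t s t r). replace (s - t) with h in H by (unfold s; ring). exact H. }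
  assert (E : k + (ae y - A) * s = - A * h).
  { pose proof (Qe_spec s r) as E1. pose proof (Qe_spec t r) as E2. fold y in E1. fold x in E2.
    unfold Pe in E1, E2. rewrite T_pos in E1, E2 by lra. unfold k, A, s in *. lra. }
  replace (t + h) with s by reflexivity.
  fold y. fold x.
  destruct (Req_dec k 0) as [Hk0|Hk0].
  { assert (Hyx : y = x) by (unfold k in Hk0; lra).
    assert (Hay : ae y = A) by (rewrite Hyx; reflexivity).
    assert (H : A * h = 0) by (rewrite Hk0, Hay in E; lra).
    assert (H0 : A = 0) by (destruct (Rmult_integral _ _ H); [assumption| contradiction]).
    replace (y - x) with k by reflexivity. rewrite Hk0, H0. unfold Rdiv. rewrite Rmult_0_l, Ropp_0, Rmult_0_l, Rminus_0_r, Rabs_R0. exact He. }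
  assert (Hk1 : Rabs k < d1).
  { eapply Rle_lt_trans; [exact Hk|]. apply Rle_lt_trans with (Rabs h * (A + 1)); [nra|].
    apply Rlt_le_trans with (d1 / (A + 1) * (A + 1)); [apply Rmult_lt_compat_r; lra| right; field; lra]. }
  specialize (H1 k Hk0 Hk1). replace (x + k) with y in H1 by (unfold k; ring).
  set (sg := (ae y - ae x) / k) in *. fold a in H1.
  assert (Hsg : 0 <= sg).
  { unfold sg. destruct (Rtotal_order k 0) as [Kn|[Kz|Kp]]; [| contradiction |].
    - pose proof (ae_mono y x ltac:(unfold k in Kn; lra)). replace ((ae y - ae x) / k) with ((ae x - ae y) / (- k)) by (field; exact Hk0).
      apply Rdiv_le_0_compat; lra.
    - pose proof (ae_mono x y ltac:(unfold k in Kp; lra)). apply Rdiv_le_0_compat; lra. }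
  assert (Ek : k * (1 + s * sg) = - A * h) by (unfold sg; rewrite <- E; unfold A; field; exact Hk0).
  match goal with |- Rabs (?q - _) < _ => replace q with (- A * / (1 + s * sg)) end.
  2:{ change (Qe s r) with y. change (Qe t r) with x. replace (y - x) with k by reflexivity. apply Rmult_eq_reg_r with (h * (1 + s * sg)).
      2:{ apply Rmult_integral_contrapositive; split; [exact Hh| nra]. }
      replace (- A * / (1 + s * sg) * (h * (1 + s * sg))) with (- A * h) by (field; nra). rewrite <- Ek. field. exact Hh. }
  replace (- A * / (1 + s * sg) - - A / (1 + t * a)) with (- A * (/ (1 + s * sg) - / (1 + t * a))) by (field; nra).
  rewrite Rabs_mult, Rabs_Ropp, (Rabs_right A) by lra.
  pose proof (IB2 s t sg a ltac:(lra) ltac:(lra) Hsg Had) as Hb.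
  replace (s - t) with h in Hb by (unfold s; ring).
  assert (Hsa : s * Rabs (sg - a) <= (t + 2) * eta).
  { apply Rle_trans with ((t + 2) * Rabs (sg - a)).
    - apply Rmult_le_compat_r; [apply Rabs_pos| unfold s; lra].
    - apply Rmult_le_compat_l; lra. }
  assert (Hha : Rabs h * a <= eps / (2 * (A + 1) * (a + 1)) * a) by (apply Rmult_le_compat_r; lra).
  assert (E1 : A * ((t + 2) * eta) <= eps / 2 * (A / (A + 1))).
  { unfold eta. right. field. lra. }
  assert (E2 : A * (eps / (2 * (A + 1) * (a + 1)) * a) <= eps / 2 * (A / (A + 1))).
  { replace (A * (eps / (2 * (A + 1) * (a + 1)) * a)) with (eps / 2 * (A / (A + 1)) * (a / (a + 1))) by (field; lra).
    assert (0 <= eps / 2 * (A / (A + 1))) by (apply Rmult_le_pos; [lra| apply Rdiv_le_0_compat; lra]).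
    assert (a / (a + 1) <= 1) by (apply Rmult_le_reg_r with (a + 1); [lra|]; unfold Rdiv; rewrite Rmult_assoc, Rinv_l by lra; lra).
    nra. }
  assert (E3 : A / (A + 1) < 1) by (apply Rmult_lt_reg_r with (A + 1); [lra|]; unfold Rdiv; rewrite Rmult_assoc, Rinv_l by lra; lra).
  apply Rle_lt_trans with (A * (s * Rabs (sg - a) + Rabs h * a)); [apply Rmult_le_compat_l; lra|].
  apply Rle_lt_trans with (eps / 2 * (A / (A + 1)) + eps / 2 * (A / (A + 1))); [nra|].
  assert (0 <= A / (A + 1)) by (apply Rdiv_le_0_compat; lra). nra.
Qed.


Definition W t x := 1 + alpha * T t * h x.
Definition cU := - (1 / alpha).
Definition cM := (alpha - 1) / alpha.
Definition U t x := ue x * Rpower (W t x) cU.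
Definition M t x := me x * Rpower (W t x) cM.
Definition uS t r := U t (Qe t r).
Definition mS t r := M t (Qe t r).

Definition Ut t x := ue x * (cU * Rpower (W t x) (cU - 1) * (alpha * h x)).
Definition Ux t x := Rpower (W t x) cU * u0' x + ue x * (cU * Rpower (W t x) (cU - 1) * (alpha * T t * hp x)).
Definition Mt t x := me x * (cM * Rpower (W t x) (cM - 1) * (alpha * h x)).
Definition Mx t x := Rpower (W t x) cM * ue x + me x * (cM * Rpower (W t x) (cM - 1) * (alpha * T t * hp x)).

Lemma W_ge1 t x : 1 <= W t x.
Proof. unfold W. pose proof (T_nn t). pose proof (h_nn x). assert (0 <= alpha * T t * h x) by (apply Rmult_le_pos; [apply Rmult_le_pos|]; lra). lra. Qed.

Lemma T_deriv t : 0 < t -> derivable_pt_lim T t 1.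
Proof.
  intro Ht. apply D_ext_loc with (fun s => s) t; [exact Ht| |apply D_id].
  intros y Hy. apply Rabs_def2 in Hy. unfold T. rewrite Rmax0_pos by lra. reflexivity.
Qed.

Lemma DF_mult x y : differentiable_pt_lim (fun u v => u * v) x y y x.
Proof.
  eapply differentiable_pt_lim_ext; [| eapply DF_val; [apply (DF_bilin 0 1 x y)| ring| ring]].
  apply locally_2d_forall. intros u v. ring.
Qed.

Lemma DF_W t x : 0 < t -> 0 < x -> differentiable_pt_lim W t x (alpha * h x) (alpha * T t * hp x).
Proof.
  intros Ht Hx.
  pose proof (differentiable_pt_lim_comp (fun a b => 1 + alpha * a * b) (fun u v => T u) (fun u v => h v)
    t x (alpha * h x) (alpha * T t) 1 0 0 (hp x) (DF_bilin 1 alpha (T t) (h x))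
    (DF_fst T t x 1 (T_deriv t Ht)) (DF_snd h t x (hp x) (h_deriv x Hx))) as K.
  eapply DF_val; [exact K| ring| ring].
Qed.

Lemma DF_pow c t x : 0 < t -> 0 < x -> differentiable_pt_lim (fun u v => Rpower (W u v) c) t x
  (c * Rpower (W t x) (c - 1) * (alpha * h x)) (c * Rpower (W t x) (c - 1) * (alpha * T t * hp x)).
Proof.
  intros Ht Hx. pose proof (W_ge1 t x).
  pose proof (differentiable_pt_lim_comp (fun a b => Rpower a c) W W t x
    (c * Rpower (W t x) (c - 1)) 0 _ _ _ _
    (DF_fst (fun a => Rpower a c) (W t x) (W t x) _ (D_Rpower c (W t x) ltac:(lra)))
    (DF_W t x Ht Hx) (DF_W t x Ht Hx)) as K.
  eapply DF_val; [exact K| ring| ring].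
Qed.

Lemma DF_U t x : 0 < t -> 0 < x -> differentiable_pt_lim U t x (Ut t x) (Ux t x).
Proof.
  intros Ht Hx.
  pose proof (differentiable_pt_lim_comp (fun a b => a * b) (fun u v => ue v) (fun u v => Rpower (W u v) cU) t x
    _ _ _ _ _ _ (DF_mult (ue x) (Rpower (W t x) cU))
    (DF_snd ue t x (u0' x) (ue_deriv x Hx)) (DF_pow cU t x Ht Hx)) as K.
  eapply DF_val; [exact K| unfold Ut; ring| unfold Ux; ring].
Qed.

Lemma DF_M t x : 0 < t -> 0 < x -> differentiable_pt_lim M t x (Mt t x) (Mx t x).
Proof.
  intros Ht Hx.
  pose proof (differentiable_pt_lim_comp (fun a b => a * b) (fun u v => me v) (fun u v => Rpower (W u v) cM) t x
    _ _ _ _ _ _ (DF_mult (me x) (Rpower (W t x) cM))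
    (DF_snd me t x (ue x) (me_deriv x)) (DF_pow cM t x Ht Hx)) as K.
  eapply DF_val; [exact K| unfold Mt; ring| unfold Mx; ring].
Qed.

Definition Dd t x := 1 + t * ad x.

Lemma uS_dt t r : 0 < t -> 0 < r -> derivable_pt_lim (fun s => uS s r) t
  (Ut t (Qe t r) * 1 + Ux t (Qe t r) * (- ae (Qe t r) / Dd t (Qe t r))).
Proof.
  intros Ht Hr. unfold uS, Dd.
  apply (derivable_pt_lim_comp_2d U (fun s => s) (fun s => Qe s r) t).
  - apply DF_U; [exact Ht| apply Qe_pos; exact Hr].
  - apply D_id.
  - apply Qe_dt; assumption.
Qed.

Lemma uS_dr t r : 0 < t -> 0 < r -> derivable_pt_lim (fun r' => uS t r') r
  (Ut t (Qe t r) * 0 + Ux t (Qe t r) * / Dd t (Qe t r)).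
Proof.
  intros Ht Hr. unfold uS, Dd.
  apply (derivable_pt_lim_comp_2d U (fun _ => t) (fun r' => Qe t r') r).
  - apply DF_U; [exact Ht| apply Qe_pos; exact Hr].
  - apply D_const.
  - apply Qe_dr; assumption.
Qed.

Lemma mS_dt t r : 0 < t -> 0 < r -> derivable_pt_lim (fun s => mS s r) t
  (Mt t (Qe t r) * 1 + Mx t (Qe t r) * (- ae (Qe t r) / Dd t (Qe t r))).
Proof.
  intros Ht Hr. unfold mS, Dd.
  apply (derivable_pt_lim_comp_2d M (fun s => s) (fun s => Qe s r) t).
  - apply DF_M; [exact Ht| apply Qe_pos; exact Hr].
  - apply D_id.
  - apply Qe_dt; assumption.
Qed.

Lemma mS_dr t r : 0 < t -> 0 < r -> derivable_pt_lim (fun r' => mS t r') r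
  (Mt t (Qe t r) * 0 + Mx t (Qe t r) * / Dd t (Qe t r)).
Proof.
  intros Ht Hr. unfold mS, Dd.
  apply (derivable_pt_lim_comp_2d M (fun _ => t) (fun r' => Qe t r') r).
  - apply DF_M; [exact Ht| apply Qe_pos; exact Hr].
  - apply D_const.
  - apply Qe_dr; assumption.
Qed.


Ltac ct := repeat match goal with
  | |- continuous (fun z => @?A z + @?B z) ?p => apply (c_plus A B p)
  | |- continuous (fun z => @?A z * @?B z) ?p => apply (c_mult A B p)
  | |- continuous (fun z => - @?A z) ?p => apply (c_opp A p)
  | |- continuous (fun _ => ?c) ?p => apply (c_const c p)
  | |- continuous (fun z => fst z) ?p => apply (c_fst p)
  | |- continuous (fun z => ?g (snd z)) ?p => apply (c_of_snd g p)
  | |- continuous (fun z => ?g (fst z)) ?p => apply (c_of_fst g p)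
  end.

Lemma T_cont t : continuous T t.
Proof. apply Rmax0_cont. Qed.

Lemma W_cont2 p : continuous (fun z => W (fst z) (snd z)) p.
Proof. unfold W. ct; [apply T_cont| apply h_cont]. Qed.

Lemma Wpow_cont2 c p : continuous (fun z => Rpower (W (fst z) (snd z)) c) p.
Proof.
  apply (c_comp1 (fun z => W (fst z) (snd z)) (fun y => Rpower y c)); [apply W_cont2|].
  apply Rpower_cont. apply Rlt_le_trans with 1; [lra| apply W_ge1].
Qed.

Lemma U_cont2 p : continuous (fun z => U (fst z) (snd z)) p.
Proof. unfold U. apply c_mult; [apply c_of_snd, ue_cont| apply Wpow_cont2]. Qed.
Lemma M_cont2 p : continuous (fun z => M (fst z) (snd z)) p.
Proof. unfold M. apply c_mult; [apply c_of_snd, me_cont| apply Wpow_cont2]. Qed.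

Lemma uS_cont2 p : continuous (fun z => uS (fst z) (snd z)) p.
Proof.
  unfold uS. apply (c_comp2 U (fun z => fst z) (fun z => Qe (fst z) (snd z)) p).
  - apply c_fst.
  - apply Qe_cont2.
  - apply U_cont2.
Qed.
Lemma mS_cont2 p : continuous (fun z => mS (fst z) (snd z)) p.
Proof.
  unfold mS. apply (c_comp2 M (fun z => fst z) (fun z => Qe (fst z) (snd z)) p).
  - apply c_fst.
  - apply Qe_cont2.
  - apply M_cont2.
Qed.

Lemma hp_cont x : 0 < x -> continuous hp x.
Proof.
  intro Hx. unfold hp. apply c1_mult; [apply c1_mult; [apply c1_const| apply r1_cont]| apply u0'_cont; exact Hx].
Qed.

Definition E1 t x := Ut t x * 1 + Ux t x * (- ae x / Dd t x).
Definition E2 t x := Ut t x * 0 + Ux t x * / Dd t x.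

Lemma Dd_pos t x : 0 <= t -> 0 < x -> 1 <= Dd t x.
Proof. intros Ht Hx. unfold Dd. pose proof (ad_nn x Hx). nra. Qed.

Lemma E1_cont2 t x : 0 < t -> 0 < x -> continuous (fun z => E1 (fst z) (snd z)) (t, x).
Proof.
  intros Ht Hx. unfold E1, Ut, Ux, Dd, Rdiv.
  apply c_plus; apply c_mult; try apply c_const.
  - ct; try apply Wpow_cont2; try apply ue_cont; try apply h_cont.
  - apply c_plus; [ct; try apply Wpow_cont2; apply u0'_cont; exact Hx|].
    ct; try apply Wpow_cont2; try apply ue_cont; try apply T_cont; apply hp_cont; exact Hx.
  - apply c_mult; [ct; apply ae_cont|].
    apply c_inv; [ct; apply ad_cont; exact Hx|]. simpl. pose proof (ad_nn x Hx). nra.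
Qed.

Lemma E2_cont2 t x : 0 < t -> 0 < x -> continuous (fun z => E2 (fst z) (snd z)) (t, x).
Proof.
  intros Ht Hx. unfold E2, Ut, Ux, Dd, Rdiv.
  apply c_plus; apply c_mult; try apply c_const.
  - ct; try apply Wpow_cont2; try apply ue_cont; try apply h_cont.
  - apply c_plus; [ct; try apply Wpow_cont2; apply u0'_cont; exact Hx|].
    ct; try apply Wpow_cont2; try apply ue_cont; try apply T_cont; apply hp_cont; exact Hx.
  - apply c_inv; [ct; apply ad_cont; exact Hx|]. simpl. pose proof (ad_nn x Hx). nra.
Qed.


Lemma W_pos t x : 0 < W t x.
Proof. pose proof (W_ge1 t x). lra. Qed.

Lemma pw_M t x : Rpower (W t x) cM = W t x * Rpower (W t x) cU.
Proof.
  replace cM with (1 + cU) by (unfold cM, cU; field; lra).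
  rewrite Rpower_plus, Rpower_1 by apply W_pos. reflexivity.
Qed.
Lemma pw_M1 t x : Rpower (W t x) (cM - 1) = Rpower (W t x) cU.
Proof. f_equal. unfold cM, cU. field. lra. Qed.

Lemma key_G x : me x * r1 x * u0' x = ue x * Gf x.
Proof.
  unfold Gf, r1. destruct (Rle_dec (ue x) 0) as [Hz|Hp].
  - rewrite rpow_npos by exact Hz. pose proof (ue_nn x). replace (ue x) with 0 by lra. ring.
  - rewrite rpow_pos by lra. replace (alpha - 1) with (1 + (alpha - 2)) by ring.
    rewrite Rpower_plus, Rpower_1 by lra. ring.
Qed.

Lemma AL1 t x : 0 <= t -> Mx t x = U t x * Dd t x.
Proof.
  intro Ht.
  assert (E : Mx t x - U t x * Dd t x =
     (alpha - 1) * alpha * t * Rpower (W t x) cU * (me x * r1 x * u0' x - ue x * Gf x)).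
  { unfold Mx, U, Dd, ad, hp. rewrite pw_M, pw_M1. rewrite h_eq. unfold W. rewrite h_eq.
    rewrite (T_pos t Ht). unfold cM. unfold r1. field. lra. }
  rewrite key_G in E. lra.
Qed.

Lemma rpow_U t x : rpow (U t x) alpha = h x * / W t x.
Proof.
  unfold U, h. destruct (Rle_dec (ue x) 0) as [Hz|Hp].
  - pose proof (ue_nn x). replace (ue x) with 0 by lra. rewrite Rmult_0_l, rpow_npos by lra. ring.
  - rewrite !rpow_pos; [| lra| apply Rmult_lt_0_compat; [lra| apply Rpower_pos]].
    rewrite <- Rpower_mult_distr by (try lra; apply Rpower_pos).
    rewrite Rpower_mult. replace (cU * alpha) with (Ropp 1) by (unfold cU; field; lra).
    rewrite Rpower_Ropp, Rpower_1 by apply W_pos. reflexivity.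
Qed.

Lemma AL2 t x : 0 <= t -> 0 <= x -> Dd t x <> 0 ->
  Mt t x * 1 + Mx t x * (- ae x / Dd t x) + M t x * rpow (U t x) alpha = 0.
Proof.
  intros Ht Hx HD. rewrite AL1 by exact Ht. rewrite rpow_U.
  replace (U t x * Dd t x * (- ae x / Dd t x)) with (- U t x * ae x) by (field; exact HD).
  unfold Mt, M, U, ae. rewrite pw_M, pw_M1. rewrite Rmax0_pos by exact Hx.
  rewrite h_eq. unfold r1. unfold cM. field. split; [apply Rgt_not_eq, W_pos| lra].
Qed.

Lemma AL3 t x : 0 <= t -> Dd t x <> 0 -> Mt t x * 0 + Mx t x * / Dd t x = U t x.
Proof. intros Ht HD. rewrite AL1 by exact Ht. field. exact HD. Qed.


Lemma uS_cont1 t r : continuous (fun y => uS t y) r.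
Proof. exact (cont2_to_1 (fun z => uS (fst z) (snd z)) t r (uS_cont2 (t, r))). Qed.
Lemma mS_cont1 t r : continuous (fun y => mS t y) r.
Proof. exact (cont2_to_1 (fun z => mS (fst z) (snd z)) t r (mS_cont2 (t, r))). Qed.

Lemma mS_0 t : mS t 0 = 0.
Proof. unfold mS, M. rewrite Qe_0, me_0. ring. Qed.

Lemma mS_deriv_r t y : 0 < t -> 0 < y -> derivable_pt_lim (fun r' => mS t r') y (uS t y).
Proof.
  intros Ht Hy. eapply D_val; [apply mS_dr; assumption|].
  unfold uS. apply AL3; [lra|]. pose proof (Dd_pos t (Qe t y) ltac:(lra) (Qe_pos t y Hy)). lra.
Qed.

Lemma exRInt_uS t a b : ex_RInt (fun y => uS t y) a b.
Proof. apply (@ex_RInt_continuous R_CompleteNormedModule). intros z _. apply uS_cont1. Qed.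

Lemma FTC_uS t e r : 0 < t -> 0 < e -> e <= r -> RInt (fun y => uS t y) e r = mS t r - mS t e.
Proof.
  intros Ht He Her.
  apply is_RInt_unique.
  apply (@is_RInt_derive R_CompleteNormedModule (fun y => mS t y) (fun y => uS t y) e r).
  - intros x Hx. rewrite Rmin_left, Rmax_right in Hx by exact Her.
    apply is_derive_Reals. apply mS_deriv_r; lra.
  - intros x _. apply uS_cont1.
Qed.

Lemma RInt_uS t r : 0 < t -> 0 <= r -> RInt (fun y => uS t y) 0 r = mS t r.
Proof.
  intros Ht Hr. destruct (Req_dec r 0) as [->|Hr0].
  { rewrite RInt_point, mS_0. reflexivity. }
  set (F := fun e => RInt (fun y => uS t y) 0 e - mS t e).
  assert (HF : forall e, 0 < e <= r -> F e = F r).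
  { intros e He. unfold F.
    rewrite <- (RInt_Chasles (fun y => uS t y) 0 e r) by apply exRInt_uS.
    rewrite (FTC_uS t e r) by lra. simpl. unfold plus. simpl. ring. }
  assert (HF0 : F 0 = 0) by (unfold F; rewrite RInt_point, mS_0; unfold zero; simpl; ring).
  assert (HFc : continuous F 0).
  { unfold F. apply (continuous_plus (fun e => RInt (fun y => uS t y) 0 e) (fun e => opp (mS t e))).
    - apply (@ex_derive_continuous R_AbsRing R_NormedModule). exists (uS t 0).
      apply (@is_derive_RInt R_NormedModule (fun y => uS t y) (RInt (fun y => uS t y) 0) 0 0).
      + exists (mkposreal 1 Rlt_0_1). intros b _. apply (@RInt_correct R_CompleteNormedModule). apply exRInt_uS.
      + apply uS_cont1.
    - apply (continuous_opp (fun e => mS t e)). apply mS_cont1. }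
  destruct (Req_dec (F r) 0) as [Hz|Hnz].
  - unfold F in Hz. lra.
  - exfalso. destruct (cont_R_inv F 0 HFc (Rabs (F r)) ltac:(apply Rabs_pos_lt; exact Hnz)) as [d [Hd0 H]].
    set (e := Rmin (d / 2) r).
    assert (He : 0 < e <= r) by (unfold e; split; [apply Rmin_pos; lra| apply Rmin_r]).
    assert (He2 : e <= d / 2) by apply Rmin_l.
    specialize (H e ltac:(rewrite Rminus_0_r, Rabs_right by lra; lra)).
    rewrite HF0, Rminus_0_r, HF in H by exact He. lra.
Qed.


Lemma Pmap_eq t x : 0 <= t -> 0 <= x -> Pmap alpha u0 t x = Pe t x.
Proof.
  intros Ht Hx. unfold Pmap, Pe, ae. rewrite mass0_eq by exact Hx.
  rewrite Rmax0_pos by exact Hx. rewrite ue_eq by exact Hx. rewrite T_pos by exact Ht. ring.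
Qed.

Lemma Pe_deriv t x : 0 < x -> derivable_pt_lim (Pe t) x (1 + (ad x * T t + ae x * 0)).
Proof.
  intro Hx. unfold Pe. apply (D_plus (fun y => y) (fun y => ae y * T t)); [apply D_id|].
  apply (D_mult ae (fun _ => T t)); [apply ae_deriv; exact Hx| apply D_const].
Qed.

Lemma partI t : 0 <= t ->
     (forall rho0, 0 <= rho0 -> 0 <= Pmap alpha u0 t rho0) /\
     (forall rho, 0 <= rho ->
        exists! rho0, 0 <= rho0 /\ Pmap alpha u0 t rho0 = rho) /\
     (forall rho0, 0 < rho0 ->
        ex_derive (Pmap alpha u0 t) rho0 /\
        1 <= Derive (Pmap alpha u0 t) rho0).
Proof.
  intro Ht. split; [| split].
  - intros x Hx. rewrite Pmap_eq by assumption. unfold Pe.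
    pose proof (ae_nn x). pose proof (T_nn t). nra.
  - intros r Hr. exists (Qe t r). split.
    + split; [apply Qe_nn; exact Hr|]. rewrite Pmap_eq by (try exact Ht; apply Qe_nn; exact Hr). apply Qe_spec.
    + intros y [Hy E]. rewrite Pmap_eq in E by assumption. symmetry. apply Qe_unique. exact E.
  - intros x Hx.
    assert (K : is_derive (Pmap alpha u0 t) x (1 + (ad x * T t + ae x * 0))).
    { apply is_derive_Reals. apply D_ext_loc with (Pe t) x; [exact Hx| |apply Pe_deriv; exact Hx].
      intros y Hy. apply Rabs_def2 in Hy. symmetry. apply Pmap_eq; lra. }
    split; [exists (1 + (ad x * T t + ae x * 0)); exact K|].
    rewrite (is_derive_unique _ _ _ K). pose proof (ad_nn x Hx). pose proof (T_nn t). nra.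
Qed.

Lemma AL4 a t : 0 <= a -> 0 <= t ->
  (if Req_EM_T a 0 then 0 else Rpower (Rpower a (- alpha) + alpha * t) (- (1 / alpha)))
  = a * Rpower (1 + alpha * t * rpow a alpha) cU.
Proof.
  intros Ha0 Ht. destruct (Req_EM_T a 0) as [->|Hne]; [ring|].
  assert (Hap : 0 < a) by lra. rewrite rpow_pos by exact Hap.
  assert (E : Rpower a (- alpha) + alpha * t = Rpower a (- alpha) * (1 + alpha * t * Rpower a alpha)).
  { rewrite Rmult_plus_distr_l, Rmult_1_r.
    replace (Rpower a (- alpha) * (alpha * t * Rpower a alpha)) with
      (alpha * t * (Rpower a (- alpha) * Rpower a alpha)) by ring.
    rewrite <- Rpower_plus. replace (- alpha + alpha) with 0 by ring. rewrite Rpower_O by exact Hap. ring. }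
  rewrite E. rewrite <- Rpower_mult_distr.
  - rewrite Rpower_mult. replace (- alpha * - (1 / alpha)) with 1 by (field; lra).
    rewrite Rpower_1 by exact Hap. reflexivity.
  - apply Rpower_pos.
  - pose proof (Rpower_pos a alpha). assert (0 <= alpha * t) by nra. assert (0 <= alpha * t * Rpower a alpha) by nra. lra.
Qed.

Lemma W0 x : W 0 x = 1.
Proof. unfold W, T. rewrite Rmax_left by lra. ring. Qed.
Lemma Rpower_1_base c : Rpower 1 c = 1.
Proof. unfold Rpower. rewrite ln_1, Rmult_0_r, exp_0. reflexivity. Qed.
Lemma Qe_t0 r : Qe 0 r = r.
Proof. symmetry. apply Qe_unique. unfold Pe, T. rewrite Rmax_left by lra. ring. Qed.

Section WithPinv.
Variable Pinv : R -> R -> R.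
Hypothesis HP : forall t rho, 0 <= t -> 0 <= rho -> 0 <= Pinv t rho /\ Pmap alpha u0 t (Pinv t rho) = rho.

Lemma Pinv_eq t r : 0 <= t -> 0 <= r -> Pinv t r = Qe t r.
Proof.
  intros Ht Hr. destruct (HP t r Ht Hr) as [H1 H2]. apply Qe_unique.
  rewrite <- Pmap_eq by assumption. exact H2.
Qed.

Lemma usol_eq t r : 0 <= t -> 0 <= r -> usol alpha u0 Pinv t r = uS t r.
Proof.
  intros Ht Hr. unfold usol, uS, U. rewrite Pinv_eq by assumption.
  assert (Hx : 0 <= Qe t r) by (apply Qe_nn; exact Hr).
  rewrite <- (ue_eq (Qe t r) Hx). rewrite AL4 by (try exact Ht; apply ue_nn).
  unfold W, h. rewrite T_pos by exact Ht. reflexivity.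
Qed.

Lemma msol_eq t r : 0 < t -> 0 <= r -> msol alpha u0 Pinv t r = mS t r.
Proof.
  intros Ht Hr. unfold msol. rewrite <- (RInt_uS t r Ht Hr). apply RInt_ext.
  intros z Hz. rewrite Rmin_left, Rmax_right in Hz by exact Hr. apply usol_eq; lra.
Qed.

Lemma usol_d1 t r : 0 < t -> 0 < r -> is_derive (fun s => usol alpha u0 Pinv s r) t (E1 t (Qe t r)).
Proof.
  intros Ht Hr. apply is_derive_Reals. apply D_ext_loc with (fun s => uS s r) t; [exact Ht| |].
  - intros s Hs. apply Rabs_def2 in Hs. symmetry. apply usol_eq; lra.
  - apply uS_dt; assumption.
Qed.
Lemma usol_d2 t r : 0 < t -> 0 < r -> is_derive (fun r' => usol alpha u0 Pinv t r') r (E2 t (Qe t r)).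
Proof.
  intros Ht Hr. apply is_derive_Reals. apply D_ext_loc with (fun r' => uS t r') r; [exact Hr| |].
  - intros s Hs. apply Rabs_def2 in Hs. symmetry. apply usol_eq; lra.
  - apply uS_dr; assumption.
Qed.
Lemma msol_d1 t r : 0 < t -> 0 < r ->
  is_derive (fun s => msol alpha u0 Pinv s r) t (- (mS t r * rpow (uS t r) alpha)).
Proof.
  intros Ht Hr. apply is_derive_Reals. apply D_ext_loc with (fun s => mS s r) t; [exact Ht| |].
  - intros s Hs. apply Rabs_def2 in Hs. symmetry. apply msol_eq; lra.
  - eapply D_val; [apply mS_dt; assumption|].
    pose proof (Qe_pos t r Hr) as Hx. pose proof (Dd_pos t (Qe t r) ltac:(lra) Hx).
    pose proof (AL2 t (Qe t r) ltac:(lra) ltac:(lra) ltac:(lra)). unfold mS, uS. lra.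
Qed.
Lemma msol_d2 t r : 0 < t -> 0 < r -> is_derive (fun r' => msol alpha u0 Pinv t r') r (uS t r).
Proof.
  intros Ht Hr. apply is_derive_Reals. apply D_ext_loc with (fun r' => mS t r') r; [exact Hr| |].
  - intros s Hs. apply Rabs_def2 in Hs. symmetry. apply msol_eq; lra.
  - apply mS_deriv_r; assumption.
Qed.

Lemma near_openQ t r : 0 < t -> 0 < r -> forall P : R * R -> Prop,
  (forall q, 0 < fst q -> 0 < snd q -> P q) -> locally (t, r) P.
Proof.
  intros Ht Hr P HPq. apply locally2_of with (Rmin t r); [apply Rmin_pos; assumption|].
  intros q H1 H2. apply HPq.
  - apply Rabs_def2 in H1. pose proof (Rmin_l t r). simpl in H1. lra.
  - apply Rabs_def2 in H2. pose proof (Rmin_r t r). simpl in H2. lra.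
Qed.

Lemma partII :
     cont_closedQ (usol alpha u0 Pinv) /\
     C1_openQ (usol alpha u0 Pinv) /\
     C1_openQ (msol alpha u0 Pinv) /\
     (forall t rho, 0 < t -> 0 < rho ->
        Derive (fun s => msol alpha u0 Pinv s rho) t
        + msol alpha u0 Pinv t rho
          * rpow (Derive (fun r => msol alpha u0 Pinv t r) rho) alpha = 0) /\
     (forall rho, 0 <= rho -> msol alpha u0 Pinv 0 rho = mass0 u0 rho) /\
     (forall t, 0 <= t -> msol alpha u0 Pinv t 0 = 0).
Proof.
  split; [|split; [|split; [|split; [|split]]]].
  - intros p Hp. destruct Hp as [Hp1 Hp2].
    rewrite (usol_eq (fst p) (snd p) Hp1 Hp2).
    apply (filterlim_within_ext closedQ (fun q => uS (fst q) (snd q))).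
    + intros q [Hq1 Hq2]. symmetry. apply usol_eq; assumption.
    + apply (filterlim_filter_le_1 (F := locally p)); [apply filter_le_within|].
      apply uS_cont2.
  - intros [t r] [Ht Hr]. simpl in Ht, Hr |- *. split; [|split; [|split]].
    + exists (E1 t (Qe t r)). apply usol_d1; assumption.
    + exists (E2 t (Qe t r)). apply usol_d2; assumption.
    + apply continuous_ext_loc with (fun q => E1 (fst q) (Qe (fst q) (snd q))).
      * apply near_openQ; [exact Ht| exact Hr|]. intros q Hq1 Hq2. unfold d1.
        symmetry. apply is_derive_unique. apply usol_d1; assumption.
      * apply (c_comp2 E1 (fun z => fst z) (fun z => Qe (fst z) (snd z)) (t, r)); [apply c_fst| apply Qe_cont2|].
        simpl. apply E1_cont2; [exact Ht| apply Qe_pos; exact Hr].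
    + apply continuous_ext_loc with (fun q => E2 (fst q) (Qe (fst q) (snd q))).
      * apply near_openQ; [exact Ht| exact Hr|]. intros q Hq1 Hq2. unfold d2.
        symmetry. apply is_derive_unique. apply usol_d2; assumption.
      * apply (c_comp2 E2 (fun z => fst z) (fun z => Qe (fst z) (snd z)) (t, r)); [apply c_fst| apply Qe_cont2|].
        simpl. apply E2_cont2; [exact Ht| apply Qe_pos; exact Hr].
  - intros [t r] [Ht Hr]. simpl in Ht, Hr |- *. split; [|split; [|split]].
    + eexists. apply msol_d1; assumption.
    + eexists. apply msol_d2; assumption.
    + apply continuous_ext_loc with (fun q => - (mS (fst q) (snd q) * rpow (uS (fst q) (snd q)) alpha)).
      * apply near_openQ; [exact Ht| exact Hr|]. intros q Hq1 Hq2. unfold d1.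
        symmetry. apply is_derive_unique. apply msol_d1; assumption.
      * apply c_opp. apply c_mult; [apply mS_cont2|].
        apply (c_comp1 (fun z => uS (fst z) (snd z)) (fun y => rpow y alpha)); [apply uS_cont2| apply rpow_cont; lra].
    + apply continuous_ext_loc with (fun q => uS (fst q) (snd q)).
      * apply near_openQ; [exact Ht| exact Hr|]. intros q Hq1 Hq2. unfold d2.
        symmetry. apply is_derive_unique. apply msol_d2; assumption.
      * apply uS_cont2.
  - intros t r Ht Hr.
    assert (D1 : Derive (fun s => msol alpha u0 Pinv s r) t = - (mS t r * rpow (uS t r) alpha))
      by (apply is_derive_unique; apply msol_d1; assumption).
    assert (D2 : Derive (fun s => msol alpha u0 Pinv t s) r = uS t r)
      by (apply is_derive_unique; apply msol_d2; assumption).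
    rewrite D1, D2.
    rewrite msol_eq by lra. ring.
  - intros r Hr. unfold msol. rewrite mass0_eq by exact Hr. unfold me. apply RInt_ext.
    intros z Hz. rewrite Rmin_left, Rmax_right in Hz by exact Hr.
    rewrite usol_eq by lra. unfold uS, U. rewrite Qe_t0, W0, Rpower_1_base, Rmult_1_r. reflexivity.
  - intros t Ht. unfold msol. rewrite RInt_point. reflexivity.
Qed.

End WithPinv.

End Main.

Theorem mainTheorem1 (alpha : R) (u0 : R -> R) :
  1 < alpha ->
  C1_nonneg u0 ->
  (forall x, 0 <= x -> 0 <= u0 x) ->
  (forall x y, 0 <= x -> x <= y -> u0 x <= u0 y) ->
  (* P_t is a bijection [0,oo) -> [0,oo) with dP_t/drho0 >= 1 *)
  (forall t, 0 <= t ->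
     (forall rho0, 0 <= rho0 -> 0 <= Pmap alpha u0 t rho0) /\
     (forall rho, 0 <= rho ->
        exists! rho0, 0 <= rho0 /\ Pmap alpha u0 t rho0 = rho) /\
     (forall rho0, 0 < rho0 ->
        ex_derive (Pmap alpha u0 t) rho0 /\
        1 <= Derive (Pmap alpha u0 t) rho0)) /\
  (* for the inverse Pinv t = P_t^{-1}, u is continuous and C^1 and m solves
     the mass equation classically *)
  (forall Pinv : R -> R -> R,
     (forall t rho, 0 <= t -> 0 <= rho ->
        0 <= Pinv t rho /\ Pmap alpha u0 t (Pinv t rho) = rho) ->
     cont_closedQ (usol alpha u0 Pinv) /\
     C1_openQ (usol alpha u0 Pinv) /\
     C1_openQ (msol alpha u0 Pinv) /\
     (forall t rho, 0 < t -> 0 < rho ->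
        Derive (fun s => msol alpha u0 Pinv s rho) t
        + msol alpha u0 Pinv t rho
          * rpow (Derive (fun r => msol alpha u0 Pinv t r) rho) alpha = 0) /\
     (forall rho, 0 <= rho -> msol alpha u0 Pinv 0 rho = mass0 u0 rho) /\
     (forall t, 0 <= t -> msol alpha u0 Pinv t 0 = 0)).
Proof.
  intros Ha [u0' [Hd Hc]] Hnn Hmono. split.
  - intros t Ht. exact (partI alpha u0 u0' Ha Hd Hnn Hmono t Ht).
  - intros Pinv HP. exact (partII alpha u0 u0' Ha Hd Hc Hnn Hmono Pinv HP).
Qed.
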